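(* For a topological space $X$ the following are equivalent: (1) $X$ is an Alster space; (2) $X$ satisfies ${\sf S}_1(\mathcal{G}_K,\mathcal{G})$; (3) ${\sf S}_1(\mathcal{G}_K,\mathcal{G}_\Omega)$; (4) ${\sf S}_1(\mathcal{G}_K,\mathcal{G}^{gp})$; (5) ${\sf S}_1(\mathcal{G}_K,\mathcal{G}_\Omega^{gp})$; (6) ${\sf S}_{fin}(\mathcal{G}_K,\mathcal{G})$; (7) ${\sf S}_{fin}(\mathcal{G}_K,\mathcal{G}^{gp})$; (8) ${\sf S}_{fin}(\mathcal{G}_K,\mathcal{G}_\Omega^{gp})$.
   Context: All spaces are infinite ${\sf T}_1$ topological spaces. $\mathcal{G}_K$ is the family of all collections $\mathcal{U}$ of ${\sf G}_\delta$ subsets of $X$ with $X\notin\mathcal{U}$ such that each compact subset of $X$ is contained in some member of $\mathcal{U}$. $\mathcal{G}$ is the family of all covers of $X$ by ${\sf G}_\delta$ sets. $\mathcal{G}_\Omega$ is the family of $\mathcal{U}\in\mathcal{G}$ with $X\notin\mathcal{U}$ such that every finite subset of $X$ is contained in some member of $\mathcal{U}$. $\mathcal{G}^{gp}$ is the family of $\mathcal{U}\in\mathcal{G}$ admitting a partition $\mathcal{U}=\bigcup_{n\in\mathbb{N}}\mathcal{U}_n$ into pairwise disjoint finite sets such that each $x\in X$ lies in $\bigcup\mathcal{U}_n$ for all but finitely many $n$; $\mathcal{G}_\Omega^{gp}=\mathcal{G}_\Omega\cap\mathcal{G}^{gp}$. $X$ is an Alster space if every member of $\mathcal{G}_K$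 has a countable subfamily covering $X$. ${\sf S}_1(\mathcal{A},\mathcal{B})$: for each sequence $(A_n)$ of elements of $\mathcal{A}$ there are $B_n\in A_n$ with $\{B_n:n\in\mathbb{N}\}\in\mathcal{B}$. ${\sf S}_{fin}(\mathcal{A},\mathcal{B})$: for each sequence $(A_n)$ of elements of $\mathcal{A}$ there are finite $B_n\subseteq A_n$ with $\bigcup_n B_n\in\mathcal{B}$. *)

(* Defs.v *)
From Stdlib Require Import List Arith.
Import ListNotations.

Section Topo.
Variable X : Type.
Variable open : (X -> Prop) -> Prop.

Definition family := (X -> Prop) -> Prop.

Definition is_topology : Prop :=
  open (fun _ => True) /\ open (fun _ => False) /\
  (forall F : family, (forall U, F U -> open U) -> open (fun x => exists U, F U /\ U x)) /\
  (forall U V, open U -> open V -> open (fun x => U x /\ V x)).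

Definition T1 : Prop :=
  forall x y : X, x <> y -> exists U, open U /\ U x /\ ~ U y.

Definition infinite_type : Prop := ~ exists l : list X, forall x, In x l.

Definition Gdelta (A : X -> Prop) : Prop :=
  exists U : nat -> (X -> Prop), (forall n, open (U n)) /\ (forall x, A x <-> forall n, U n x).

Definition compact (K : X -> Prop) : Prop :=
  forall F : family, (forall U, F U -> open U) -> (forall x, K x -> exists U, F U /\ U x) ->
  exists l : list (X -> Prop), (forall U, In U l -> F U) /\ (forall x, K x -> exists U, In U l /\ U x).

(* "X is not a member of F" (up to extensional equality of sets) *)
Definition no_full_member (F : family) : Prop := ~ exists A, F A /\ forall x, A x.

Definition cG_K (F : family) : Prop :=
  (forall A, F A -> Gdelta A) /\ no_full_member F /\
  (forall K, compact K -> exists A, F A /\ forall x, K x -> A x).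

Definition cG (F : family) : Prop :=
  (forall A, F A -> Gdelta A) /\ (forall x, exists A, F A /\ A x).

Definition cG_Omega (F : family) : Prop :=
  cG F /\ no_full_member F /\
  (forall l : list X, exists A, F A /\ forall x, In x l -> A x).

Definition cG_gp (F : family) : Prop :=
  cG F /\
  exists P : nat -> list (X -> Prop),
    (forall A, F A <-> exists n, In A (P n)) /\
    (forall n m A, n <> m -> In A (P n) -> ~ In A (P m)) /\
    (forall x, exists N, forall n, N <= n -> exists A, In A (P n) /\ A x).

Definition cG_Omega_gp (F : family) : Prop := cG_Omega F /\ cG_gp F.

Definition S1 (cA cB : family -> Prop) : Prop :=
  forall Fs : nat -> family, (forall n, cA (Fs n)) ->
  exists f : nat -> (X -> Prop), (forall n, Fs n (f n)) /\ cB (fun U => exists n, U = f n).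

Definition Sfin (cA cB : family -> Prop) : Prop :=
  forall Fs : nat -> family, (forall n, cA (Fs n)) ->
  exists g : nat -> list (X -> Prop), (forall n U, In U (g n) -> Fs n U) /\
    cB (fun U => exists n, In U (g n)).

Definition Alster : Prop :=
  forall F : family, cG_K F ->
  exists f : nat -> (X -> Prop), (forall n, F (f n)) /\ (forall x, exists n, f n x).

End Topo.

(* Main.v *)
Require Import Defs.
From Stdlib Require Import List Arith Lia FinFun Classical IndefiniteDescription FunctionalExtensionality PropExtensionality Cantor.
Import ListNotations.

Lemma choice_fun {A B : Type} (R : A -> B -> Prop) :
  (forall a, exists b, R a b) -> exists f, forall a, R a (f a).
Proof.
  intro H. exists (fun a => proj1_sig (constructive_indefinite_description _ (H a))).
  intro a. exact (proj2_sig (constructive_indefinite_description _ (H a))).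
Qed.

Lemma set_ext {X : Type} (A B : X -> Prop) : (forall x, A x <-> B x) -> A = B.
Proof. intro H. apply functional_extensionality; intro x. apply propositional_extensionality. apply H. Qed.

Lemma fam_ext {X : Type} (F G : (X -> Prop) -> Prop) : (forall U, F U <-> G U) -> F = G.
Proof. intro H. apply functional_extensionality; intro x. apply propositional_extensionality. apply H. Qed.

Lemma Gdelta_ext {X} {open : (X -> Prop) -> Prop} (A B : X -> Prop) :
  (forall x, A x <-> B x) -> Gdelta X open A -> Gdelta X open B.
Proof.
  intros H [U [HU HA]]. exists U; split; auto. intro x. rewrite <- H. apply HA.
Qed.

Lemma Gdelta_open {X} {open : (X -> Prop) -> Prop} (A : X -> Prop) :
  open A -> Gdelta X open A.
Proof. intro H. exists (fun _ => A). split; auto. intro x; split; auto. intro H1; apply (H1 0). Qed.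

Lemma Gdelta_empty {X} {open : (X -> Prop) -> Prop} :
  is_topology X open -> Gdelta X open (fun _ => False).
Proof. intros [_ [H _]]. apply Gdelta_open. exact H. Qed.

Lemma Gdelta_inter {X} {open : (X -> Prop) -> Prop} (B : nat -> X -> Prop) :
  (forall i, Gdelta X open (B i)) -> Gdelta X open (fun x => forall i, B i x).
Proof.
  intro H. destruct (choice_fun _ H) as [W HW].
  exists (fun p => W (fst (of_nat p)) (snd (of_nat p))). split.
  - intro p. apply (proj1 (HW _)).
  - intro x. split.
    + intros Hx p. apply (proj2 (HW _)). apply Hx.
    + intros Hx i. apply (proj2 (HW i)). intro k.
      specialize (Hx (to_nat (i, k))). rewrite cancel_of_to in Hx. exact Hx.
Qed.

Lemma open_union {X} {open : (X -> Prop) -> Prop} (U V : X -> Prop) :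
  is_topology X open -> open U -> open V -> open (fun x => U x \/ V x).
Proof.
  intros [_ [_ [Hu _]]] HU HV.
  specialize (Hu (fun W => W = U \/ W = V)).
  assert (E : (fun x => exists W, (W = U \/ W = V) /\ W x) = (fun x => U x \/ V x)).
  { apply set_ext. intro x. split.
    - intros [W [[->| ->] Hw]]; auto.
    - intros [h|h]; eauto. }
  rewrite <- E. apply Hu. intros W [->| ->]; auto.
Qed.

Lemma Gdelta_union {X} {open : (X -> Prop) -> Prop} (A B : X -> Prop) :
  is_topology X open -> Gdelta X open A -> Gdelta X open B -> Gdelta X open (fun x => A x \/ B x).
Proof.
  intros Ht [U [HU HA]] [V [HV HB]].
  exists (fun p => fun x => U (fst (of_nat p)) x \/ V (snd (of_nat p)) x). split.
  - intro p. apply open_union; auto.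
  - intro x. split.
    + intros [h|h] p; [left; apply HA | right; apply HB]; auto.
    + intro H. destruct (classic (A x)) as [h|h]; [left; auto|right].
      apply HB. intro m. rewrite HA in h. apply not_all_ex_not in h. destruct h as [n hn].
      specialize (H (to_nat (n, m))). rewrite cancel_of_to in H. simpl in H.
      destruct H; [contradiction|auto].
Qed.

Lemma compact_empty {X} {open : (X -> Prop) -> Prop} : compact X open (fun _ => False).
Proof. intros F _ _. exists []. split; [intros U []| intros x []]. Qed.

Lemma compact_union {X} {open : (X -> Prop) -> Prop} (K L : X -> Prop) :
  compact X open K -> compact X open L -> compact X open (fun x => K x \/ L x).
Proof.
  intros HK HL F HF Hc.
  destruct (HK F HF (fun x h => Hc x (or_introl h))) as [l1 [H1 H1']].
  destruct (HL F HF (fun x h => Hc x (or_intror h))) as [l2 [H2 H2']].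
  exists (l1 ++ l2). split.
  - intros U HU. apply in_app_or in HU. destruct HU; auto.
  - intros x [h|h].
    + destruct (H1' x h) as [U [? ?]]. exists U; split; auto. apply in_or_app; auto.
    + destruct (H2' x h) as [U [? ?]]. exists U; split; auto. apply in_or_app; auto.
Qed.

Lemma compact_list {X} {open : (X -> Prop) -> Prop} (l : list X) :
  compact X open (fun x => In x l).
Proof.
  intros F HF Hc. induction l as [|a l IH].
  - exists []. split; [intros U []| intros x []].
  - destruct IH as [l' [H1 H2]]. { intros x h; apply Hc; right; auto. }
    destruct (Hc a (or_introl eq_refl)) as [U [HU Ua]].
    exists (U :: l'). split.
    + intros V [<-|h]; auto.
    + intros x [<-|h]. * exists U; split; simpl; auto. * destruct (H2 x h) as [V [? ?]]. exists V; split; simpl; auto.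
Qed.
Lemma points_avoid {X : Type} (L : list (X -> Prop)) :
  exists zs : list X, forall C, In C L -> (forall x, C x) \/ exists z, In z zs /\ ~ C z.
Proof.
  induction L as [|C L [zs Hz]].
  - exists []. intros C [].
  - destruct (classic (forall x, C x)) as [h|h].
    + exists zs. intros C' [<-|h']; auto.
    + apply not_all_ex_not in h. destruct h as [z hz]. exists (z :: zs).
      intros C' [<-|h'].
      * right. exists z; split; simpl; auto.
      * destruct (Hz C' h') as [?|[z' [? ?]]]; auto. right. exists z'; split; simpl; auto.
Qed.

Lemma avoid {X} {open : (X -> Prop) -> Prop} (U : family X) (K : X -> Prop) :
  cG_K X open U -> compact X open K -> forall L,
  exists A, U A /\ (forall x, K x -> A x) /\ ~ In A L.
Proof.
  intros [_ [Hnf Hc]] HK L. destruct (points_avoid L) as [zs Hz].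
  destruct (Hc _ (compact_union K _ HK (compact_list zs))) as [A [HA HA']].
  exists A. split; [auto|split]. { intros x h; apply HA'; auto. }
  intro HL. destruct (Hz A HL) as [h|[z [h1 h2]]].
  - apply Hnf. exists A; auto.
  - apply h2. apply HA'. right; auto.
Qed.

Lemma inj_seq {X} {open : (X -> Prop) -> Prop} (U : family X) (K : X -> Prop) :
  cG_K X open U -> compact X open K ->
  exists a : nat -> (X -> Prop), (forall m, U (a m)) /\ (forall m m', a m = a m' -> m = m') /\
     (forall m x, K x -> a m x).
Proof.
  intros HU HK. destruct (choice_fun _ (avoid U K HU HK)) as [next Hn].
  set (lst := fun n => nat_rect (fun _ => list (X -> Prop)) [] (fun _ l => next l :: l) n).
  assert (Hl : forall m m', m' < m -> In (next (lst m')) (lst m)).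
  { induction m; intros m' h; [lia|]. simpl. destruct (Nat.eq_dec m' m) as [->|ne]; [left; auto|].
    right. apply IHm. lia. }
  exists (fun m => next (lst m)). split; [|split].
  - intro m. apply Hn.
  - intros m m' E. destruct (Nat.lt_trichotomy m m') as [h|[h|h]]; auto.
    + exfalso. apply (proj2 (proj2 (Hn (lst m')))). rewrite <- E. apply Hl; auto.
    + exfalso. apply (proj2 (proj2 (Hn (lst m)))). rewrite E. apply Hl; auto.
  - intros m x h. apply Hn; auto.
Qed.

Lemma pigeon {T : Type} (a : nat -> T) :
  (forall m m', a m = a m' -> m = m') -> forall L, exists m, ~ In (a m) L.
Proof.
  intros Ha L. apply not_all_not_ex. intro H.
  assert (Hnd : NoDup (map a (seq 0 (S (length L))))).
  { apply FinFun.Injective_map_NoDup; [exact Ha| apply seq_NoDup]. }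
  assert (Hi : incl (map a (seq 0 (S (length L)))) L).
  { intros y Hy. apply in_map_iff in Hy. destruct Hy as [m [<- _]]. apply NNPP. apply H. }
  pose proof (NoDup_incl_length Hnd Hi) as Hlen. rewrite length_map, length_seq in Hlen. lia.
Qed.
Definition goodK {X} (U : nat -> family X) (K B : X -> Prop) : Prop :=
  forall n, exists a : nat -> (X -> Prop), (forall m, U n (a m)) /\
    (forall m m', a m = a m' -> m = m') /\ (forall m x, K x \/ B x -> a m x).

Lemma Gdelta_of_cGK {X} {open : (X -> Prop) -> Prop} (U : family X) A :
  cG_K X open U -> U A -> Gdelta X open A.
Proof. intros [H _] h; auto. Qed.

Lemma big_step {X} {open : (X -> Prop) -> Prop} (U : nat -> family X) :
  is_topology X open -> (forall n, cG_K X open (U n)) -> Alster X open ->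
  forall r K, compact X open K ->
  exists B : nat -> (X -> Prop), (forall i, Gdelta X open (B i)) /\ (forall i, goodK U K (B i)) /\
    forall l : list X, length l <= r -> exists i, forall x, In x l -> B i x.
Proof.
  intros Ht HU HA r. induction r as [|r IH]; intros K HK.
  - exists (fun _ _ => False). split; [|split].
    + intro; apply Gdelta_empty; auto.
    + intros i n. destruct (inj_seq (U n) K (HU n) HK) as [a [H1 [H2 H3]]].
      exists a. split; [|split]; auto. intros m x [h|[]]; auto.
    + intros l hl. destruct l; [|simpl in hl; lia]. exists 0. intros x [].
  - set (Hfam := fun C : X -> Prop => exists L, compact X open L /\
      exists (B : nat -> X -> Prop) (a : nat -> nat -> nat -> X -> Prop),
       (forall i, Gdelta X open (B i)) /\
       (forall l : list X, length l <= r -> exists i, forall x, In x l -> B i x) /\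
       (forall i n m, U n (a i n m)) /\ (forall i n m m', a i n m = a i n m' -> m = m') /\
       (forall i n m x, K x \/ L x \/ B i x -> a i n m x) /\
       (forall x, C x <-> forall i n m, a i n m x)).
    assert (HF : cG_K X open Hfam).
    { split; [|split].
      - intros C [L [_ [B [a [_ [_ [Ha [_ [_ HC]]]]]]]]].
        apply (Gdelta_ext (fun x => forall i n m, a i n m x)). { intro x; rewrite HC; tauto. }
        apply Gdelta_inter; intro i. apply Gdelta_inter; intro n. apply Gdelta_inter; intro m.
        apply (Gdelta_of_cGK (U n)); auto.
      - intros [C [[L [_ [B [a [_ [_ [Ha [_ [_ HC]]]]]]]]] Hfull]].
        destruct (HU 0) as [_ [Hnf _]]. apply Hnf. exists (a 0 0 0). split; auto.
        intro x. apply HC; auto.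
      - intros L HL. destruct (IH _ (compact_union K L HK HL)) as [B [HB [Hg Hl]]].
        destruct (choice_fun (fun i (a : nat -> nat -> X -> Prop) => forall n, (forall m, U n (a n m)) /\
            (forall m m', a n m = a n m' -> m = m') /\ (forall m x, (K x \/ L x) \/ B i x -> a n m x)))
          as [a Ha].
        { intro i. apply (choice_fun (fun n (b : nat -> X -> Prop) => (forall m, U n (b m)) /\ (forall m m', b m = b m' -> m = m') /\ (forall m x, (K x \/ L x) \/ B i x -> b m x))). apply Hg. }
        exists (fun x => forall i n m, a i n m x). split.
        + exists L. split; auto. exists B, a. split; [auto|split; [auto|split; [|split; [|split]]]].
          * intros i n m; apply Ha.
          * intros i n; apply Ha.
          * intros i n m x h. apply Ha. tauto.
          * tauto.
        + intros x h i n m. apply Ha. tauto. }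
    destruct (HA Hfam HF) as [c [Hc Hcov]].
    destruct (choice_fun (fun l (p : (nat -> X -> Prop) * (nat -> nat -> nat -> X -> Prop)) =>
       (forall i, Gdelta X open (fst p i)) /\
       (forall l : list X, length l <= r -> exists i, forall x, In x l -> fst p i x) /\
       (forall i n m, U n (snd p i n m)) /\ (forall i n m m', snd p i n m = snd p i n m' -> m = m') /\
       (forall i n m x, K x \/ fst p i x -> snd p i n m x) /\
       (forall x, c l x <-> forall i n m, snd p i n m x))) as [pp Hpp].
    { intro l. destruct (Hc l) as [L [_ [B [a [H1 [H2 [H3 [H4 [H5 H6]]]]]]]]].
      exists (B, a). simpl. split; [|split; [|split; [|split; [|split]]]]; auto.
      intros i n m x h. apply H5. tauto. }
    exists (fun p x => c (fst (of_nat p)) x \/ fst (pp (fst (of_nat p))) (snd (of_nat p)) x).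
    split; [|split].
    + intro p. apply Gdelta_union; auto.
      * apply (proj1 HF). auto.
      * apply Hpp.
    + intros p n. destruct (Hpp (fst (of_nat p))) as [_ [_ [H3 [H4 [H5 H6]]]]].
      exists (snd (pp (fst (of_nat p))) (snd (of_nat p)) n). split; [|split].
      { intro m; apply H3. } { intros m m'; apply H4. }
      intros m x [h|[h|h]].
      * apply H5; auto.
      * apply H6; auto.
      * apply H5; auto.
    + intros l hl. destruct l as [|y l].
      * exists 0. intros x [].
      * destruct (Hcov y) as [l0 Hy]. simpl in hl.
        destruct (proj1 (proj2 (Hpp l0)) l ltac:(lia)) as [i Hi].
        exists (to_nat (l0, i)). rewrite cancel_of_to. simpl.
        intros x [<-|h]; [left; auto| right; auto].
Qed.
Definition Jn (n : nat) : nat := n - Nat.sqrt n * Nat.sqrt n.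

Lemma Jn_block k j : j <= 2 * k -> Jn (k * k + j) = j.
Proof.
  intro h. unfold Jn. rewrite (Nat.sqrt_unique (k * k + j) k); [lia|]. nia.
Qed.

Lemma block_dec n : exists k t, t <= 2 * k /\ n = k * k + t.
Proof.
  exists (Nat.sqrt n), (n - Nat.sqrt n * Nat.sqrt n).
  pose proof (Nat.sqrt_spec n (Nat.le_0_l n)). nia.
Qed.

Lemma block_inj k t k' t' : t <= 2 * k -> t' <= 2 * k' -> k * k + t = k' * k' + t' -> k = k'.
Proof.
  intros h1 h2 E. destruct (Nat.lt_trichotomy k k') as [h|[h|h]]; auto; exfalso.
  - assert (S k * S k <= k' * k') by (apply Nat.mul_le_mono; lia). nia.
  - assert (S k' * S k' <= k * k) by (apply Nat.mul_le_mono; lia). nia.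
Qed.

Lemma alster_S1 {X} {open : (X -> Prop) -> Prop} :
  is_topology X open -> Alster X open -> S1 X (cG_K X open) (cG_Omega_gp X open).
Proof.
  intros Ht HA U HU.
  destruct (choice_fun (fun r (B : nat -> X -> Prop) =>
     (forall i, Gdelta X open (B i)) /\ (forall i, goodK U (fun _ => False) (B i)) /\
     (forall l : list X, length l <= r -> exists i, forall x, In x l -> B i x)))
    as [Bs HBs].
  { intro r. apply (big_step U Ht HU HA r). apply compact_empty. }
  set (D := fun j => Bs (fst (of_nat j)) (snd (of_nat j))).
  assert (HDl : forall l : list X, exists j, forall x, In x l -> D j x).
  { intro l. destruct (proj2 (proj2 (HBs (length l))) l (le_n _)) as [i Hi].
    exists (to_nat (length l, i)). unfold D. rewrite cancel_of_to. exact Hi. }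
  destruct (choice_fun (fun j (aa : nat -> nat -> X -> Prop) => forall n,
     (forall m, U n (aa n m)) /\ (forall m m', aa n m = aa n m' -> m = m') /\
     (forall m x, D j x -> aa n m x))) as [aa Haa].
  { intro j. apply (choice_fun (fun n (b : nat -> X -> Prop) => (forall m, U n (b m)) /\
       (forall m m', b m = b m' -> m = m') /\ (forall m x, D j x -> b m x))).
    intro n. destruct (proj1 (proj2 (HBs (fst (of_nat j)))) (snd (of_nat j)) n) as [b [h1 [h2 h3]]].
    exists b. split; [exact h1|split; [exact h2|]]. intros m x h. apply h3. right. exact h. }
  destruct (choice_fun (fun n (g : list (X -> Prop) -> nat) => forall L, ~ In (aa (Jn n) n (g L)) L))
    as [ms Hms].
  { intro n. apply (choice_fun (fun L m => ~ In (aa (Jn n) n m) L)).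
    apply pigeon. apply Haa. }
  set (lst := fun n => nat_rect (fun _ => list (X -> Prop)) []
                (fun n l => aa (Jn n) n (ms n l) :: l) n).
  set (f := fun n => aa (Jn n) n (ms n (lst n))).
  assert (Hin : forall n i, i < n -> In (f i) (lst n)).
  { induction n; intros i h; [lia|]. simpl. destruct (Nat.eq_dec i n) as [->|ne]; [left; auto|].
    right. apply IHn. lia. }
  assert (Hinj : forall n n', f n = f n' -> n = n').
  { intros n n' E. destruct (Nat.lt_trichotomy n n') as [h|[h|h]]; auto; exfalso.
    - apply (Hms n' (lst n')). fold (f n'). rewrite <- E. apply Hin; auto.
    - apply (Hms n (lst n)). fold (f n). rewrite E. apply Hin; auto. }
  assert (HfD : forall n x, D (Jn n) x -> f n x).
  { intros n x h. unfold f. apply Haa. exact h. }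
  assert (HfU : forall n, U n (f n)). { intro n. unfold f. apply Haa. }
  assert (Hbl : forall k j x, j <= 2 * k -> D j x -> f (k * k + j) x).
  { intros k j x h hx. apply HfD. rewrite Jn_block; auto. }
  assert (HG : cG X open (fun A => exists n, A = f n)).
  { split.
    - intros A [n ->]. apply (proj1 (HU n)). auto.
    - intro x. destruct (HDl [x]) as [j Hj]. exists (f (j * j + j)). split; [eauto|].
      apply Hbl; [lia|]. apply Hj. left; auto. }
  exists f. split; [exact HfU|]. split; [split; [exact HG|split]|split; [exact HG|]].
  - intros [A [[n ->] Hfull]]. destruct (HU n) as [_ [Hnf _]]. apply Hnf. exists (f n); auto.
  - intro l. destruct (HDl l) as [j Hj]. exists (f (j * j + j)). split; [eauto|].
    intros x hx. apply Hbl; [lia|]. auto.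
  - exists (fun k => map (fun t => f (k * k + t)) (seq 0 (S (2 * k)))). split; [|split].
    + intro A. split.
      * intros [n ->]. destruct (block_dec n) as [k [t [h ->]]]. exists k.
        apply in_map_iff. exists t. split; auto. apply in_seq. lia.
      * intros [k Hk]. apply in_map_iff in Hk. destruct Hk as [t [<- _]]. eauto.
    + intros k k' A ne H1 H2. apply in_map_iff in H1, H2.
      destruct H1 as [t [<- h1]]. destruct H2 as [t' [E h2]]. apply in_seq in h1, h2.
      apply Hinj in E. apply ne. symmetry. apply (block_inj k' t' k t); lia.
    + intro x. destruct (HDl [x]) as [j Hj]. exists j. intros k hk.
      exists (f (k * k + j)). split.
      * apply in_map_iff. exists j. split; auto. apply in_seq. lia.
      * apply Hbl; [lia|]. apply Hj. left; auto.
Qed.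
Lemma S1_mono {X} (cA cB cB' : family X -> Prop) :
  (forall F, cB F -> cB' F) -> S1 X cA cB -> S1 X cA cB'.
Proof. intros H HS Fs HF. destruct (HS Fs HF) as [f [h1 h2]]. exists f; auto. Qed.

Lemma Sfin_mono {X} (cA cB cB' : family X -> Prop) :
  (forall F, cB F -> cB' F) -> Sfin X cA cB -> Sfin X cA cB'.
Proof. intros H HS Fs HF. destruct (HS Fs HF) as [f [h1 h2]]. exists f; auto. Qed.

Lemma S1_Sfin {X} (cA cB : family X -> Prop) : S1 X cA cB -> Sfin X cA cB.
Proof.
  intros HS Fs HF. destruct (HS Fs HF) as [f [h1 h2]]. exists (fun n => [f n]). split.
  - intros n V [<-|[]]. auto.
  - replace (fun U => exists n, In U [f n]) with (fun U => exists n, U = f n); auto.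
    apply fam_ext. intro V. split; intros [n h]; exists n; simpl in *; intuition.
Qed.

Lemma Sfin_Alster {X} {open : (X -> Prop) -> Prop} :
  Sfin X (cG_K X open) (cG X open) -> Alster X open.
Proof.
  intros HS F HF. destruct (HS (fun _ => F) (fun _ => HF)) as [g [h1 [_ h2]]].
  destruct (proj2 (proj2 HF) _ compact_empty) as [A0 [HA0 _]].
  exists (fun p => nth (snd (of_nat p)) (g (fst (of_nat p))) A0). split.
  - intro p. destruct (nth_in_or_default (snd (of_nat p)) (g (fst (of_nat p))) A0) as [h|h].
    + apply (h1 (fst (of_nat p))). exact h.
    + rewrite h. exact HA0.
  - intro x. destruct (h2 x) as [A [[n hn] hA]]. destruct (In_nth _ _ A0 hn) as [i [_ hi]].
    exists (to_nat (n, i)). rewrite cancel_of_to. simpl. rewrite hi. exact hA.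
Qed.

Theorem theorem4p6 (X : Type) (open : (X -> Prop) -> Prop)
  (Htop : is_topology X open) (HT1 : T1 X open) (Hinf : infinite_type X) :
  (Alster X open <-> S1 X (cG_K X open) (cG X open)) /\
  (Alster X open <-> S1 X (cG_K X open) (cG_Omega X open)) /\
  (Alster X open <-> S1 X (cG_K X open) (cG_gp X open)) /\
  (Alster X open <-> S1 X (cG_K X open) (cG_Omega_gp X open)) /\
  (Alster X open <-> Sfin X (cG_K X open) (cG X open)) /\
  (Alster X open <-> Sfin X (cG_K X open) (cG_gp X open)) /\
  (Alster X open <-> Sfin X (cG_K X open) (cG_Omega_gp X open)).
Proof.
  assert (Ha : Alster X open -> S1 X (cG_K X open) (cG_Omega_gp X open)) by (apply alster_S1; auto).
  assert (E1 : forall F, cG_Omega_gp X open F -> cG X open F) by (intros F [[h _] _]; exact h).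
  assert (E2 : forall F, cG_Omega_gp X open F -> cG_Omega X open F) by (intros F [h _]; exact h).
  assert (E3 : forall F, cG_Omega_gp X open F -> cG_gp X open F) by (intros F [_ h]; exact h).
  assert (E4 : forall F, cG_Omega X open F -> cG X open F) by (intros F [h _]; exact h).
  assert (E5 : forall F, cG_gp X open F -> cG X open F) by (intros F [h _]; exact h).
  split; [|split; [|split; [|split; [|split; [|split]]]]]; split; intro H.
  - exact (S1_mono _ _ _ E1 (Ha H)).
  - apply Sfin_Alster. apply S1_Sfin. exact H.
  - exact (S1_mono _ _ _ E2 (Ha H)).
  - apply Sfin_Alster. apply S1_Sfin. exact (S1_mono _ _ _ E4 H).
  - exact (S1_mono _ _ _ E3 (Ha H)).
  - apply Sfin_Alster. apply S1_Sfin. exact (S1_mono _ _ _ E5 H).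
  - exact (Ha H).
  - apply Sfin_Alster. apply S1_Sfin. exact (S1_mono _ _ _ E1 H).
  - exact (S1_Sfin _ _ (S1_mono _ _ _ E1 (Ha H))).
  - apply Sfin_Alster. exact H.
  - exact (S1_Sfin _ _ (S1_mono _ _ _ E3 (Ha H))).
  - apply Sfin_Alster. exact (Sfin_mono _ _ _ E5 H).
  - exact (S1_Sfin _ _ (Ha H)).
  - apply Sfin_Alster. exact (Sfin_mono _ _ _ E1 H).
Qed.
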